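(* There are constants $C_5$ and $\Delta_1$ (depending only on $r$) such that for every subset $U\subset V_n$ with $|U|=m$ and every $\alpha\in(0,1)$, $$\mathbb P\big(e(U,U^c)\le\alpha r|U|\big)\le C_5\exp\left(-\frac r2(1-\alpha)\,m\log(n/m)+\Delta_1 m\right).$$
   Context: Fix an integer $r\ge3$, let $V_n=\{1,\dots,n\}$ with $rn$ even, and let $\mathbb P$ be the law of the random multigraph $G_n$ on $V_n$ obtained by giving each vertex $r$ half-edges and pairing all $rn$ half-edges uniformly at random. For $U\subset V_n$, $e(U,U^c)$ is the number of edges of $G_n$ (pairs of matched half-edges) with one endpoint in $U$ and the other in $U^c=V_n\setminus U$. *)

(* Defs.v *)
From mathcomp Require Import all_boot all_fingroup.
From Stdlib Require Import Reals.

Set Implicit Arguments.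
Unset Strict Implicit.
Unset Printing Implicit Defensive.

(* Half-edges: vertex i in 'I_n (vertices 1..n shifted to 0..n-1), slot j in 'I_r. *)
Definition half (n r : nat) : finType := ('I_n * 'I_r)%type.

Definition is_pairing (n r : nat) (s : {perm half n r}) : bool :=
  [forall h, (s h != h) && (s (s h) == h)].

(* e(U,U^c): number of matched pairs {h, s h} with one endpoint in U and the
   other outside.  Each such edge is counted exactly once, via its half-edge
   whose vertex lies in U. *)
Definition cut_edges (n r : nat) (U : {set 'I_n}) (s : {perm half n r}) : nat :=
  #|[set h : half n r | (h.1 \in U) && ((s h).1 \notin U)]|.

Definition pairings (n r : nat) : {set {perm half n r}} :=
  [set s | is_pairing s].

(* P(e(U,U^c) <= k) under the uniform law on pairings (configuration model). *)
Definition prob_cut_le (n r : nat) (U : {set 'I_n}) (k : R) : R :=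
  (INR #|[set s in pairings n r |
          if Rle_dec (INR (cut_edges U s)) k then true else false]|
   / INR #|pairings n r|)%R.

(* Main.v *)
From Pilot Require Import Defs.
From mathcomp Require Import all_boot all_fingroup.
From Stdlib Require Import Reals.
From mathcomp Require Import zify.
From Stdlib Require Import Lra.
From Stdlib Require Znat.
Import Pilot.Defs.

Set Implicit Arguments.
Unset Strict Implicit.
Unset Printing Implicit Defensive.


Definition invol (T : finType) (s : {perm T}) : bool :=
  [forall h, (s h != h) && (s (s h) == h)].
Definition Bs (T : finType) (A : {set T}) (s : {perm T}) : {set T} :=
  [set h | s h \in A].
Definition Inn (T : finType) (A : {set T}) (s : {perm T}) : nat :=
  #|A :&: Bs A s|.
Definition Fs (T : finType) (A : {set T}) (L : nat) : {set {perm T}} :=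
  [set s | invol s && (L <= Inn A s)].

Lemma involP (T : finType) (s : {perm T}) :
  reflect (forall h, s h != h /\ s (s h) = h) (invol s).
Proof.
apply: (iffP forallP) => H h; have := H h.
  by case/andP => -> /eqP.
by case=> -> ->; rewrite eqxx.
Qed.

Lemma conj_invol (T : finType) (s : {perm T}) x y :
  invol s -> invol (tperm x y * s * tperm x y)%g.
Proof.
move/involP=> H; apply/involP=> h; rewrite !permM; split.
  apply/negP=> /eqP E.
  have : s (tperm x y h) = tperm x y h.
    by rewrite -{2}E tpermK.
  by have [/eqP] := H (tperm x y h).
by rewrite tpermK (proj2 (H _)) tpermK.
Qed.

Lemma card_dep (X Y : finType) (S : {set X}) (f : X -> {set Y}) :
  #|[set p : X * Y | (p.1 \in S) && (p.2 \in f p.1)]| = \sum_(x in S) #|f x|.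
Proof.
rewrite -sum1_card.
rewrite (eq_bigl (fun p : X * Y => (p.1 \in S) && (p.2 \in f p.1))); last first.
  by move=> p; rewrite inE.
rewrite -(pair_big_dep (fun x => x \in S) (fun x y => y \in f x) (fun _ _ => 1)) /=.
by apply: eq_bigr => x _; rewrite sum1_card.
Qed.

Lemma Inn_conj (T : finType) (A : {set T}) (s : {perm T}) x y :
  invol s -> x \in A -> s x \in A -> y \notin A -> s y \notin A ->
  Inn A s <= Inn A (tperm x y * s * tperm x y)%g + 2.
Proof.
move=> /involP H xA sxA yA syA.
rewrite /Inn.
have sub : A :&: Bs A s \subset (A :&: Bs A (tperm x y * s * tperm x y)%g) :|: [set x; s x].
  apply/subsetP=> h; rewrite /Bs !inE => /andP [hA shA].
  case: (eqVneq h x) => [->|hx]; first by rewrite orbT.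
  case: (eqVneq h (s x)) => [->|hsx]; first by rewrite !orbT.
  rewrite hA /= orbF !permM.
  have hy : h != y by apply/eqP=> E; move: hA; rewrite E (negbTE yA).
  have shx : s h != x.
    by apply/eqP=> E; move: hsx; rewrite -E (proj2 (H h)) eqxx.
  have shy : s h != y.
    by apply/eqP=> E; move: shA; rewrite E (negbTE yA).
  rewrite (tpermD (x:=x) (y:=y) (z:=h)) ?(eq_sym _ h) //.
  by rewrite tpermD ?shA // eq_sym.
apply: leq_trans (subset_leq_card sub) _.
by rewrite (leq_trans (leq_card_setU _ _)) // leq_add2l cards2; case: (_ != _).
Qed.

Lemma BA_le (T : finType) (A : {set T}) (s : {perm T}) :
  invol s -> #|~: A :&: Bs A s| <= #|A :\: Bs A s|.
Proof.
move/involP=> H.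
apply: leq_trans (leq_imset_card s _).
apply: subset_leq_card.
apply/subsetP=> h; rewrite /Bs !inE => /andP [hA shA].
apply/imsetP; exists (s h); last by rewrite (proj2 (H h)).
by rewrite !inE (proj2 (H h)) hA shA.
Qed.

Lemma cjK (T : finType) (x y : T) (s : {perm T}) :
  (tperm x y * (tperm x y * s * tperm x y) * tperm x y)%g = s.
Proof. by rewrite !mulgA tperm2 mul1g -mulgA tperm2 mulg1. Qed.

Lemma step (T : finType) (A : {set T}) (L : nat) :
  2 * #|A| <= #|T| ->
  #|Fs A L| * (L * (#|T| - 2 * #|A| + L)) <= #|Fs A (L - 2)| * (#|A| * #|A|).
Proof.
move=> h2.
pose Ts (s : {perm T}) := setX (A :&: Bs A s) (~: A :\: Bs A s).
pose P := [set p : {perm T} * (T * T) | (p.1 \in Fs A L) && (p.2 \in Ts p.1)].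
pose cj (p : {perm T} * (T * T)) := (tperm p.2.1 p.2.2 * p.1 * tperm p.2.1 p.2.2)%g.
pose psi (p : {perm T} * (T * T)) := (cj p, (p.2.1, cj p p.2.2)).
have step1 : #|Fs A L| * (L * (#|T| - 2 * #|A| + L)) <= #|P|.
  rewrite card_dep -sum_nat_const; apply: leq_sum => s.
  rewrite inE => /andP [inv hL].
  rewrite cardsX.
  have e1 := cardsID (Bs A s) A.
  have e2 := cardsID (Bs A s) (~: A).
  have e3 := cardsC A.
  have e4 := BA_le A inv.
  move: hL; rewrite /Inn => hL.
  nia.
have inj : injective psi.
  move=> [s1 [x1 y1]] [s2 [x2 y2]]; rewrite /psi /cj /= => [[E1 E2 E3]].
  subst x2.
  have ey : y1 = y2 by move: E3; rewrite E1 => /perm_inj.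
  subst y2; congr (_, (_, _)).
  have := congr1 (fun q => tperm x1 y1 * q * tperm x1 y1)%g E1.
  by rewrite !cjK.
have sub : psi @: P \subset setX (Fs A (L - 2)) (setX A A).
  apply/subsetP=> q /imsetP [[s [x y]]].
  rewrite !inE /= => /andP [/andP [inv hL] /andP [/andP [xA sxA] /andP [ysx yA]]] ->.
  rewrite /psi /cj /= xA conj_invol //=.
  have hc := Inn_conj inv xA sxA yA ysx.
  move/involP: inv => H.
  apply/andP; split; first by lia.
  have n1 : x != s x by rewrite eq_sym (proj1 (H x)).
  have n2 : y != s x by apply/eqP=> E; move: sxA; rewrite -E (negbTE yA).
  by rewrite !permM tpermR tpermD.
apply: (leq_trans step1).
rewrite -(card_imset _ inj).
by apply: leq_trans (subset_leq_card sub) _; rewrite cardsX cardsX.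
Qed.

Lemma chain (T : finType) (A : {set T}) (t : nat) :
  2 * #|A| <= #|T| ->
  #|Fs A (2 * t - 1)| * (t`! * expn (#|T| - 2 * #|A|) t)
    <= #|Fs A 0| * expn (#|A| * #|A|) t.
Proof.
move=> h2; elim: t => [|t IH]; first by rewrite muln1.
have hs := @step T A (2 * t.+1 - 1) h2.
have e : 2 * t.+1 - 1 - 2 = 2 * t - 1 by lia.
rewrite e in hs.
set D := #|T| - 2 * #|A|; set K2 := #|A| * #|A|.
set a := #|Fs A (2 * t.+1 - 1)|; set b := #|Fs A (2 * t - 1)|.
have h3 : a * (t.+1 * D) <= b * K2.
  apply: leq_trans hs; rewrite leq_mul2l; apply/orP; right.
  apply: leq_mul; first by lia.
  rewrite /D; lia.
rewrite factS expnS.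
have -> : a * (t.+1 * t`! * (D * expn D t)) = (a * (t.+1 * D)) * (t`! * expn D t) by nia.
apply: leq_trans (leq_mul h3 (leqnn _)) _.
have -> : b * K2 * (t`! * expn D t) = K2 * (b * (t`! * expn D t)) by nia.
have -> : #|Fs A 0| * expn K2 t.+1 = K2 * (#|Fs A 0| * expn K2 t) by rewrite expnS; nia.
by rewrite leq_mul2l IH orbT.
Qed.

Local Open Scope R_scope.

Lemma Rln_le x y : 0 < x -> x <= y -> ln x <= ln y.
Proof.
move=> hx hxy; case: (Rle_lt_or_eq_dec _ _ hxy) => h.
  by apply: Rlt_le; apply: ln_increasing.
by rewrite h; apply: Rle_refl.
Qed.

Lemma Rexp_le x y : x <= y -> exp x <= exp y.
Proof.
move=> hxy; case: (Rle_lt_or_eq_dec _ _ hxy) => h.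
  by apply: Rlt_le; apply: exp_increasing.
by rewrite h; apply: Rle_refl.
Qed.

Lemma ln2_lt1 : ln 2 < 1.
Proof.
have h := exp_ineq1 1 R1_neq_R0.
rewrite -[X in _ < X](ln_exp 1); apply: ln_increasing; lra.
Qed.

Lemma exp_pow_INR (x : R) (n : nat) : exp x ^ n = exp (INR n * x).
Proof.
elim: n => [|n IH]; first by rewrite /= Rmult_0_l exp_0.
by rewrite [exp x ^ n.+1]/= IH S_INR -exp_plus; congr exp; ring.
Qed.

Lemma INR_expn (a b : nat) : INR (expn a b) = INR a ^ b.
Proof.
elim: b => [|b IH]; first by rewrite expn0.
by rewrite expnS -multE mult_INR IH.
Qed.

Lemma INR_muln (a b : nat) : INR (a * b)%nat = INR a * INR b.
Proof. by rewrite -multE mult_INR. Qed.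

Lemma succ_pow_le (t : nat) : INR t.+1 ^ t <= exp 1 * INR t ^ t.
Proof.
case: t => [|t]; first by rewrite /=; have := exp_ineq1 1 R1_neq_R0; lra.
set u := INR t.+1.
have hu : 0 < u by apply: lt_0_INR; apply/ltP.
have e : INR t.+2 = u * (1 + / u) by rewrite S_INR -/u; field; lra.
rewrite e Rpow_mult_distr [exp 1 * _]Rmult_comm.
apply: Rmult_le_compat_l; first by apply: pow_le; lra.
have h1 : 1 + / u <= exp (/ u).
  by have := exp_ineq1_le (/ u); lra.
apply: Rle_trans (pow_incr _ _ _ _) _.
  split; last exact: h1; have := Rinv_0_lt_compat _ hu; lra.
rewrite exp_pow_INR -/u; right; congr exp; field; lra.
Qed.

Lemma fact_bound (t : nat) : INR t ^ t <= INR (t`!) * exp 1 ^ t.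
Proof.
elim: t => [|t IH].
  by rewrite /=; lra.
rewrite factS INR_muln [INR t.+1 ^ t.+1]/= [exp 1 ^ t.+1]/=.
have hp : 0 <= INR t.+1 := pos_INR _.
have he : 0 < exp 1 := exp_pos 1.
have := succ_pow_le t.
move=> h.
have h2 : INR t.+1 ^ t <= exp 1 * (INR (t`!) * exp 1 ^ t).
  apply: Rle_trans h _; apply: Rmult_le_compat_l; lra.
have h3 := Rmult_le_compat_l _ _ _ hp h2.
apply: Rle_trans h3 _; right; ring.
Qed.

Lemma ratio (e0 T0 F d kk tt : R) (t : nat) :
  0 < T0 -> 0 < tt -> 0 < d -> 0 <= e0 -> 0 <= kk ->
  tt ^ t <= F * exp 1 ^ t ->
  e0 * (F * d ^ t) <= T0 * kk ^ t ->
  e0 / T0 <= (kk * exp 1 / (tt * d)) ^ t.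
Proof.
move=> hT htt hd he0 hkk hF hmain.
set X := (kk * exp 1 / (tt * d)) ^ t.
have hX : X * (tt * d) ^ t = kk ^ t * exp 1 ^ t.
  rewrite /X -!Rpow_mult_distr; congr pow; field; lra.
have hP : 0 < (tt * d) ^ t by apply: pow_lt; nra.
have hdt : 0 <= d ^ t by apply: pow_le; lra.
have he : 0 <= exp 1 ^ t by apply: pow_le; have := exp_pos 1; lra.
suff : e0 <= T0 * X.
  move=> h; apply: (Rmult_le_reg_l T0) => //.
  apply: Rle_trans h; right; field; lra.
apply: (Rmult_le_reg_r ((tt * d) ^ t)) => //.
rewrite Rmult_assoc hX Rpow_mult_distr.
apply: (Rle_trans _ (e0 * (F * exp 1 ^ t * d ^ t))).
  apply: Rmult_le_compat_l => //; apply: Rmult_le_compat_r => //.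
have h := Rmult_le_compat_r _ _ _ he hmain.
rewrite (_ : e0 * (F * exp 1 ^ t * d ^ t) = e0 * (F * d ^ t) * exp 1 ^ t); last by ring.
by apply: Rle_trans h _; right; ring.
Qed.

Lemma real_key (rr mm nn al tt P k d : R) (t : nat) :
  3 <= rr -> 1 <= mm -> 4 * mm <= nn -> 0 < al < 1 -> tt = INR t ->
  (1 - al) * rr * mm / 2 <= tt -> k = rr * mm -> d = rr * nn - 2 * k ->
  P <= 1 -> P <= (k * k * exp 1 / (tt * d)) ^ t ->
  P <= exp (- (rr / 2) * (1 - al) * mm * ln (nn / mm) + 3 * rr * mm).
Proof.
move=> hr hm hn hal htt htau hk hd hP1 hPq.
set tau := (1 - al) * rr * mm / 2 in htau *.
have tau0 : 0 < tau.
  rewrite /tau /Rdiv; repeat apply: Rmult_lt_0_compat; lra.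
have hrn : 0 < rr * nn by apply: Rmult_lt_0_compat; lra.
have htt0 : 0 < tt by lra.
have hd0 : rr * nn / 2 <= d.
  have := Rmult_le_compat_l rr (4 * mm) nn ltac:(lra) hn.
  rewrite hd hk; lra.
have hd1 : 0 < d by nra.
have hnn : 0 < nn by lra.
have he1 : 0 < exp 1 := exp_pos 1.
set q := k * k * exp 1 / (tt * d).
have hk0 : 0 < k by rewrite hk; apply: Rmult_lt_0_compat; lra.
have hq0 : 0 < q.
  rewrite /q; apply: Rdiv_lt_0_compat; repeat apply: Rmult_lt_0_compat; lra.
set B := exp 1 * 4 * mm * / (1 - al) * / nn.
have hB0 : 0 < B.
  rewrite /B; repeat apply: Rmult_lt_0_compat; try lra; apply: Rinv_0_lt_compat; lra.
have hqB : q <= B.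
  have h1 : tau * (rr * nn / 2) <= tt * d by apply: Rmult_le_compat; lra.
  have h2 : q <= k * k * exp 1 / (tau * (rr * nn / 2)).
    rewrite /q /Rdiv; apply: Rmult_le_compat_l.
      by apply: Rlt_le; repeat apply: Rmult_lt_0_compat; lra.
    apply: Rinv_le_contravar => //; apply: Rmult_lt_0_compat; lra.
  apply: Rle_trans h2 _; right; rewrite /B /tau hk; field; lra.
have hlnB : ln B = 1 + (ln 2 + ln 2) + ln mm - ln (1 - al) - ln nn.
  have h4 : 4 = 2 * 2 by ring.
  rewrite /B h4 !ln_mult ?ln_Rinv ?ln_exp; try lra; try nra;
    try (apply: Rinv_0_lt_compat; lra);
    repeat apply: Rmult_lt_0_compat; try lra; try (apply: Rinv_0_lt_compat; lra).
have hlnnm : ln (nn / mm) = ln nn - ln mm.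
  rewrite /Rdiv ln_mult; [rewrite ln_Rinv; [ring|lra] | lra | apply: Rinv_0_lt_compat; lra].
have hl2 := ln2_lt1.
have hlal : - ln (1 - al) <= / (1 - al) - 1.
  rewrite -ln_Rinv; last lra.
  have := exp_ineq1_le (ln (/ (1 - al))).
  rewrite exp_ln; last by apply: Rinv_0_lt_compat; lra.
  lra.
have htauinv : tau * / (1 - al) = rr * mm / 2 by rewrite /tau; field; lra.
set E := - (rr / 2) * (1 - al) * mm * ln (nn / mm) + 3 * rr * mm.
have hE : E = - tau * (ln nn - ln mm) + 3 * rr * mm.
  by rewrite /E hlnnm /tau; field.
have key : tau * ln B <= E.
  rewrite hE hlnB.
  have h5 : tau * (- ln (1 - al)) <= tau * (/ (1 - al) - 1).
    by apply: Rmult_le_compat_l; lra.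
  have h6 : tau <= rr * mm / 2 by rewrite /tau; nra.
  have h7 : tau * (ln 2 + ln 2) <= tau * 2 by apply: Rmult_le_compat_l; lra.
  nra.
have hlnq : ln q <= ln B by apply: Rln_le.
case: (Rle_lt_dec (ln q) 0) => hs.
  apply: Rle_trans hPq _.
  rewrite -(exp_ln (q ^ t)); last by apply: pow_lt.
  apply: Rexp_le; rewrite ln_pow // -htt.
  have : tt * ln q <= tau * ln q by nra.
  have : tau * ln q <= tau * ln B by apply: Rmult_le_compat_l; lra.
  lra.
apply: Rle_trans hP1 _.
rewrite -exp_0; apply: Rexp_le.
have : tau * ln q <= tau * ln B by apply: Rmult_le_compat_l; lra.
nra.
Qed.

Local Close Scope R_scope.

Lemma card_half (n r : nat) : #|half n r| = n * r.
Proof. by rewrite /half card_prod !card_ord. Qed.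

Lemma card_Aset (n r : nat) (U : {set 'I_n}) :
  #|[set h : half n r | h.1 \in U]| = #|U| * r.
Proof.
have -> : [set h : half n r | h.1 \in U] = setX U [set: 'I_r].
  by apply/setP => -[i j]; rewrite !inE andbT.
by rewrite cardsX cardsT card_ord.
Qed.

Lemma pairings_Fs (n r : nat) (U : {set 'I_n}) :
  pairings n r = Fs [set h : half n r | h.1 \in U] 0.
Proof. by apply/setP => s; rewrite !inE leq0n andbT. Qed.

Lemma cut_Inn (n r : nat) (U : {set 'I_n}) (s : {perm half n r}) :
  cut_edges U s + Inn [set h : half n r | h.1 \in U] s = #|U| * r.
Proof.
rewrite -card_Aset -(cardsID (Bs [set h : half n r | h.1 \in U] s)) addnC /Inn.
congr (_ + _); apply: eq_card => h; rewrite /Bs !inE andbC //.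
Qed.


Theorem lemma2 (r : nat) (hr : 3 <= r) :
  exists C5 Delta1 : R,
    forall (n : nat), ~~ odd (r * n) ->
    forall (U : {set 'I_n}) (alpha : R),
      (0 < alpha < 1)%R ->
      let m := #|U| in
      (prob_cut_le r U (alpha * INR r * INR m)
       <= C5 * exp (- (INR r / 2) * (1 - alpha) * INR m * ln (INR n / INR m)
                    + Delta1 * INR m))%R.
Proof.
exists 1%R, (3 * INR r)%R => n hodd U alpha hal m.
rewrite Rmult_1_l.
set E := (- (INR r / 2) * (1 - alpha) * INR m * ln (INR n / INR m) + 3 * INR r * INR m)%R.
set Ev := [set s in pairings n r |
          if Rle_dec (INR (cut_edges U s)) (alpha * INR r * INR m) then true else false].
have hEv : Ev \subset pairings n r by apply/subsetP => s; rewrite inE => /andP [].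
have hP : prob_cut_le r U (alpha * INR r * INR m) = (INR #|Ev| / INR #|pairings n r|)%R by [].
rewrite hP.
have hP1 : (INR #|Ev| / INR #|pairings n r| <= 1)%R.
  have := subset_leq_card hEv => /leP /le_INR hle.
  case: (posnP #|pairings n r|) => h0.
    by rewrite h0 /= /Rdiv Rinv_0 Rmult_0_r; lra.
  have hpos : (0 < INR #|pairings n r|)%R by apply: lt_0_INR; apply/ltP.
  apply: (Rmult_le_reg_r (INR #|pairings n r|)) => //.
  rewrite /Rdiv Rmult_assoc Rinv_l; lra.
have hmn : m <= n by rewrite /m -[X in _ <= X](card_ord n) max_card.
have hr3 : (3 <= INR r)%R by have := le_INR 3 r (elimT leP hr); rewrite /=; lra.
case: (posnP m) => hm0.
  have -> : E = 0%R by rewrite /E hm0 /=; ring.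
  by rewrite exp_0.
case: (ltnP n (4 * m)) => hn4.
  apply: Rle_trans hP1 _; rewrite -exp_0; apply: Rexp_le.
  have hmR : (1 <= INR m)%R by have := le_INR 1 m (elimT leP hm0); rewrite /=; lra.
  have hnR : (INR n < 4 * INR m)%R.
    have := lt_INR n (4 * m) (elimT ltP hn4); rewrite INR_muln /=; lra.
  have hmnR : (INR m <= INR n)%R by apply: le_INR; apply/leP.
  have hl0 : (0 <= ln (INR n / INR m))%R.
    rewrite -ln_1; apply: Rln_le; first lra.
    apply: (Rmult_le_reg_r (INR m)); first lra.
    rewrite /Rdiv Rmult_assoc Rinv_l; lra.
  have hl2 : (ln (INR n / INR m) <= 2)%R.
    have := ln2_lt1 => h2.
    have -> : (2 = 1 + 1)%R by ring.
    apply: Rle_trans (_ : ln 4 <= _)%R.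
      apply: Rln_le.
        by apply: Rdiv_lt_0_compat; lra.
      apply: (Rmult_le_reg_r (INR m)); first lra.
      rewrite /Rdiv Rmult_assoc Rinv_l; lra.
    rewrite (_ : 4 = 2 * 2)%R; last ring.
    rewrite ln_mult; lra.
  set w := (INR r / 2 * (1 - alpha) * INR m)%R.
  have hrm : (0 <= INR r * INR m)%R by apply: Rmult_le_pos; lra.
  have hw0 : (0 <= w)%R.
    rewrite /w (_ : INR r / 2 * (1 - alpha) * INR m = (INR r * INR m / 2) * (1 - alpha))%R; last by field.
    apply: Rmult_le_pos; lra.
  have hw1 : (w <= INR r * INR m / 2)%R.
    rewrite /w (_ : INR r / 2 * (1 - alpha) * INR m = (INR r * INR m / 2) * (1 - alpha))%R; last by field.
    have := Rmult_le_compat_l (INR r * INR m / 2) (1 - alpha) 1 ltac:(lra) ltac:(lra).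
    lra.
  have hwl : (w * ln (INR n / INR m) <= INR r * INR m / 2 * 2)%R.
    by apply: Rmult_le_compat; lra.
  have -> : E = (- (w * ln (INR n / INR m)) + 3 * INR r * INR m)%R by rewrite /E /w; ring.
  lra.
set A := [set h : half n r | h.1 \in U].
have hK : #|A| = m * r by rewrite /A card_Aset.
have hN : #|half n r| = n * r by rewrite card_half.
have h2K : 2 * #|A| <= #|half n r| by rewrite hK hN; nia.
have hmR : (1 <= INR m)%R by have := le_INR 1 m (elimT leP hm0); rewrite /=; lra.
have hnR : (4 * INR m <= INR n)%R.
  have := le_INR (4 * m) n (elimT leP hn4); rewrite INR_muln /=; lra.
set tau := ((1 - alpha) * INR r * INR m / 2)%R.
have tau0 : (0 < tau)%R.
  rewrite /tau /Rdiv; repeat apply: Rmult_lt_0_compat; lra.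
have [hu1 hu2] := archimed (- tau).
set z := Z.sub 1 (up (- tau)).
have hz1 : (tau <= IZR z)%R by rewrite /z minus_IZR; lra.
have hz2 : (IZR z < tau + 1)%R by rewrite /z minus_IZR; lra.
have hz0 : (0 <= z)%Z by apply: le_IZR; lra.
set t := Z.to_nat z.
have htz : INR t = IZR z by rewrite /t INR_IZR_INZ Znat.Z2Nat.id.
have hsub : Ev \subset Fs A (2 * t - 1).
  apply/subsetP => s; rewrite !inE => /andP [hs].
  case: Rle_dec => // hc _.
  rewrite (_ : invol s = true) //=.
  have hci := cut_Inn U s.
  rewrite -/A -/m in hci.
  case: (leqP (2 * t - 1) (Inn A s)) => // hlt.
  exfalso.
  have h3 : Inn A s + 2 <= 2 * t by lia.
  have := le_INR _ _ (elimT leP h3).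
  rewrite -plusE plus_INR INR_muln /= htz.
  have := f_equal INR hci; rewrite -plusE plus_INR INR_muln => hci'.
  rewrite /tau in hz1 hz2.
  have : (INR r * INR m * alpha = alpha * INR r * INR m)%R by ring.
  have : ((1 - alpha) * INR r * INR m = INR r * INR m - alpha * INR r * INR m)%R by ring.
  lra.
have hch := chain t h2K.
have hEv2 := subset_leq_card hsub.
rewrite -pairings_Fs in hch.
have hmain : #|Ev| * (t`! * expn (#|half n r| - 2 * #|A|) t)
              <= #|pairings n r| * expn (#|A| * #|A|) t.
  by apply: leq_trans hch; apply: leq_mul.
move: hmain => /leP /le_INR; rewrite !INR_muln !INR_expn !INR_muln => hmainR.
case: (posnP #|pairings n r|) => h0.
  rewrite h0 /= /Rdiv Rinv_0 Rmult_0_r; apply: Rlt_le; exact: exp_pos.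
have hpos : (0 < INR #|pairings n r|)%R by apply: lt_0_INR; apply/ltP.
have htt0 : (0 < INR t)%R by rewrite htz; lra.
have hd : INR (#|half n r| - 2 * #|A|) = (INR r * INR n - 2 * INR #|A|)%R.
  rewrite minus_INR; last by apply/leP.
  by rewrite hN !INR_muln /=; ring.
have hkR : INR #|A| = (INR r * INR m)%R by rewrite hK INR_muln; ring.
have hd0 : (0 < INR (#|half n r| - 2 * #|A|))%R.
  rewrite hd hkR.
  have := Rmult_le_compat_l (INR r) (4 * INR m) (INR n) ltac:(lra) hnR.
  have : (0 < INR r * INR m)%R by apply: Rmult_lt_0_compat; lra.
  lra.
have hrat := ratio (tt := INR t) hpos htt0 hd0 (pos_INR _)
   (Rmult_le_pos _ _ (pos_INR _) (pos_INR _)) (fact_bound t) hmainR.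
apply: (real_key (rr := INR r) (mm := INR m) (nn := INR n) (al := alpha)
         (tt := INR t) (k := INR #|A|) (d := INR (#|half n r| - 2 * #|A|)) (t := t)) => //.
by rewrite htz; rewrite /tau in hz1; lra.
Qed.
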